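(* Let $t\in(-1,1)$ and $m,n$ integers. (i) If $t\neq0$ and $n-2\ge m\ge0$, then $\det\begin{pmatrix}P_n^m(t)&P_{n-2}^m(t)\\(P_n^m)'(t)&(P_{n-2}^m)'(t)\end{pmatrix}\neq0$. (ii) For $0\le m\le n$, $P_n^m(t)$ and $(P_n^m)'(t)$ do not vanish simultaneously.
   Context: $P_n$ is the Legendre polynomial of degree $n\in\mathbb{N}_0$ and $P_n^m(t)=(1-t^2)^{m/2}\frac{d^m}{dt^m}P_n(t)$, $0\le m\le n$, are the associated Legendre functions of the first kind. *)

(* Defs.v *)
From HB Require Import structures.
From mathcomp Require Import all_boot all_order all_algebra.
From mathcomp Require Import all_classical all_reals all_analysis.
Set Implicit Arguments. Unset Strict Implicit. Unset Printing Implicit Defensive.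
Import Order.TTheory GRing.Theory Num.Theory.
Local Open Scope ring_scope.

Definition legendre (R : realType) (n : nat) : {poly R} :=
  ((2%:R ^+ n * (n`!)%:R)^-1) *: ((('X ^+ 2 - 1) ^+ n) ^`(n)).

Definition assoc_legendre (R : realType) (n m : nat) (t : R) : R :=
  (Num.sqrt (1 - t ^+ 2)) ^+ m * ((legendre R n) ^`(m)).[t].

(* Main.v *)
Require Import Defs.
From HB Require Import structures.
From mathcomp Require Import all_boot all_order all_algebra.
From mathcomp Require Import all_classical all_reals all_analysis.
From mathcomp Require Import ring lra zify.
Import Order.TTheory GRing.Theory Num.Theory.
Local Open Scope ring_scope.

Section Poly.
Variable R : realType.
Implicit Types p q : {poly R}.

Lemma derivXp p : ('X * p)^`() = p + 'X * p^`().
Proof. by rewrite derivM derivX mul1r. Qed.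

Lemma LX p k : ('X * p)^`(k.+1) = 'X * p^`(k.+1) + p^`(k) *+ k.+1.
Proof.
elim: k => [|k IH]; first by rewrite derivn1 derivXp derivn0 addrC.
by rewrite derivnS IH derivD derivXp derivMn -!derivnS mulrSr; ring.
Qed.

Lemma LXd p k : ('X * p^`())^`(k) = 'X * p^`(k.+1) + p^`(k) *+ k.
Proof.
case: k => [|k]; first by rewrite derivn0 derivn1 mulr0n addr0.
by rewrite LX -!derivSn.
Qed.

Lemma derivQ : (('X ^+ 2 - 1 : {poly R}))^`() = 'X *+ 2.
Proof. by rewrite derivB derivXn derivC subr0 expr1. Qed.

Lemma LQ p k : (('X ^+ 2 - 1) * p)^`(k.+2) =
  ('X ^+ 2 - 1) * p^`(k.+2) + (2 * k.+2)%:R *: ('X * p^`(k.+1)) + (k.+2 * k.+1)%:R *: p^`(k).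
Proof.
elim: k => [|k IH].
  rewrite derivnS derivn1 derivM derivQ derivD derivM derivMn derivX derivM derivQ.
  rewrite derivn1 derivn0 derivnS derivn1 -!mul_polyC; ring.
rewrite derivnS IH !derivD !derivZ derivM derivQ derivXp -!derivnS.
rewrite -!mul_polyC; ring.
Qed.

Definition U n : {poly R} := ('X ^+ 2 - 1) ^+ n.
Definition cL n : R := (2%:R ^+ n * (n`!)%:R)^-1.
Lemma legE n : legendre R n = cL n *: (U n)^`(n).
Proof. by []. Qed.

Lemma cLS n : cL n.+1 * (2 * n.+1)%:R = cL n.
Proof.
rewrite /cL factS natrM natrM exprS.
have h1 : (2%:R : R) != 0 by rewrite pnatr_eq0.
have h2 : (n.+1%:R : R) != 0 by rewrite pnatr_eq0.
have h3 : ((n`!)%:R : R) != 0 by rewrite pnatr_eq0 -lt0n fact_gt0.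
have h4 : (2%:R ^+ n : R) != 0 by rewrite expf_neq0.
field. by rewrite h3 h4 nat1r h2.
Qed.

Lemma dU n : (U n.+1)^`() = (2 * n.+1)%:R *: ('X * U n).
Proof.
rewrite /U deriv_exp derivQ /= -scaler_nat natrM -mul_polyC -mul_polyC.
ring.
Qed.

Lemma L1 n : (legendre R n.+1)^`() = 'X * (legendre R n)^`() + n.+1%:R *: legendre R n.
Proof.
rewrite !legE !derivZ -!derivnS derivSn dU derivnZ LX -(cLS n).
rewrite -![_ *: _]mul_polyC; ring.
Qed.

Lemma leg0 : legendre R 0 = 1.
Proof. by rewrite legE /U /cL expr0 derivn0 expr0 mul1r fact0 invr1 scale1r. Qed.

Lemma leg1 : legendre R 1 = 'X.
Proof.
rewrite legE /U expr1 derivn1 derivQ /cL expr1 -[_ *: _]mul_polyC.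
have -> : 'X *+ 2 = (2%:R)%:P * 'X :> {poly R} by rewrite mul_polyC scaler_nat.
have c : (2 * (1`!)%:R)^-1 * 2%:R = 1 :> R by rewrite /= mulr1 mulVf // pnatr_eq0.
by rewrite mulrA -polyCM c mul1r.
Qed.

Lemma L2 n : n.+1%:R *: legendre R n.+1 =
  n.+1%:R *: ('X * legendre R n) + ('X ^+ 2 - 1) * (legendre R n)^`().
Proof.
case: n => [|k].
  by rewrite leg1 leg0 mulr1 -polyC1 derivC mulr0 addr0.
set n := k.+1.
have H1 : (U n.+1)^`(n.+1) = (2 * n.+1)%:R *: ('X * (U n)^`(n) + (U n)^`(k) *+ n).
  by rewrite derivSn dU derivnZ LX.
have H2 : (U n.+1)^`(n.+1) = ('X ^+ 2 - 1) * (U n)^`(k.+2)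
    + (2 * k.+2)%:R *: ('X * (U n)^`(k.+1)) + (k.+2 * k.+1)%:R *: (U n)^`(k).
  by rewrite -LQ /U exprS.
have E : ('X ^+ 2 - 1) * (U n)^`(n.+1) = (n.+1 * n)%:R *: (U n)^`(k).
  apply/eqP; rewrite -subr_eq0.
  have -> : ('X ^+ 2 - 1) * (U n)^`(n.+1) - (n.+1 * n)%:R *: (U n)^`(k) =
     (('X ^+ 2 - 1) * (U n)^`(k.+2)
    + (2 * k.+2)%:R *: ('X * (U n)^`(k.+1)) + (k.+2 * k.+1)%:R *: (U n)^`(k))
    - ((2 * n.+1)%:R *: ('X * (U n)^`(n) + (U n)^`(k) *+ n)).
    rewrite /n -![_ *: _]mul_polyC; ring.
  by rewrite -H1 -H2 subrr.
rewrite !legE derivZ -derivnS H1 -!scalerAr E -(cLS n).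
rewrite -![_ *: _]mul_polyC /n; ring.
Qed.

Lemma comb (V : zmodType) (a b c d : V) : a - b = c - d -> c = d -> a = b.
Proof. by move=> e cd; apply/eqP; rewrite -subr_eq0 e cd subrr. Qed.

Lemma comb2 (V : lmodType R) (a b c d e f : V) (k : R) :
  a - b = (c - d) + k *: (e - f) -> c = d -> e = f -> a = b.
Proof. by move=> E cd ef; apply/eqP; rewrite -subr_eq0 E cd ef !subrr scaler0 addr0. Qed.

Arguments comb {V a b c d}.
Arguments comb2 {V a b c d e f} k.
Notation P n := (legendre R n).

Lemma B0 n : 'X * (P n.+1)^`() - (P n)^`() = n.+1%:R *: P n.+1.
Proof. rewrite L1 L2 -![_ *: _]mul_polyC; ring. Qed.

Lemma L4 n : (P n.+2)^`() - (P n)^`() = (2 * n + 3)%:R *: P n.+1.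
Proof.
apply: (comb _ (B0 n)); rewrite L1 -![_ *: _]mul_polyC.
ring.
Qed.

Lemma L3 n : n.+2%:R *: P n.+2 = (2 * n + 3)%:R *: ('X * P n.+1) - n.+1%:R *: P n.
Proof.
rewrite L2 L1.
apply: (comb _ (congr1 (fun z => 'X * z) (esym (L2 n)))).
rewrite -![_ *: _]mul_polyC.
ring.
Qed.

Lemma ODE0 n : ('X ^+ 2 - 1) * (P n)^`(2) + (2%:R *: 'X) * (P n)^`() = (n * n.+1)%:R *: P n.
Proof.
have H := congr1 deriv (L2 n).
rewrite derivZ L1 derivD derivZ derivXp derivM derivQ in H.
apply: (comb _ (esym H)).
rewrite derivnS derivn1 -![_ *: _]mul_polyC; ring.
Qed.

Lemma ODE n j : ('X ^+ 2 - 1) * (P n)^`(j.+2) + (2 * j.+1)%:R *: ('X * (P n)^`(j.+1))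
   + (j * j.+1)%:R *: (P n)^`(j) = (n * n.+1)%:R *: (P n)^`(j).
Proof.
elim: j => [|j IH].
  have := ODE0 n; rewrite derivn1 derivn0 => H.
  apply: (comb _ H); rewrite -![_ *: _]mul_polyC; ring.
have H := congr1 deriv IH.
rewrite !derivD !derivZ derivM derivQ derivXp -!derivnS in H.
apply: (comb _ H); rewrite -![_ *: _]mul_polyC; ring.
Qed.

Lemma size_deriv_le p : (size p^`() <= (size p).-1)%N.
Proof. by rewrite /deriv size_poly. Qed.

Lemma size_derivn_le p k : (size (p^`(k)) <= size p - k)%N.
Proof.
elim: k => [|k IH]; first by rewrite derivn0 subn0.
rewrite derivnS (leq_trans (size_deriv_le _)) //.
by rewrite subnS -!subn1 leq_sub2r.
Qed.

Lemma size_P n : (size (P n) <= n.+1)%N.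
Proof.
rewrite legE (leq_trans (size_scale_leq _ _)) // (leq_trans (size_derivn_le _ _)) //.
have : (size (U n) <= (2 * n).+1)%N.
  rewrite /U (leq_trans (size_poly_exp_leq _ _)) // size_Xn_sub_1 //.
move=> h; rewrite leq_subLR (leq_trans h) //.
by rewrite mul2n -addnn addnS.
Qed.

Lemma PderivK n j : (n < j)%N -> (P n)^`(j) = 0.
Proof. by move=> h; apply: derivn_poly0; rewrite (leq_trans (size_P n)). Qed.

Lemma Pkk k : exists2 c : R, 0 < c & (P k)^`(k) = c%:P.
Proof.
elim: k => [|k [c c0 IH]]; first by exists 1; rewrite ?ltr01 // derivn0 leg0.
exists ((2 * k).+1%:R * c); first by rewrite mulr_gt0 // ltr0n.
rewrite derivSn L1 derivnD derivnZ LXd PderivK // mulr0 add0r IH.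
rewrite -![_ *: _]mul_polyC polyCM -scaler_nat -![_ *: _]mul_polyC; ring.
Qed.

Lemma LXg p k : ('X * p)^`(k) = 'X * p^`(k) + p^`(k.-1) *+ k.
Proof. by case: k => [|k]; rewrite ?derivn0 ?mulr0n ?addr0 // LX. Qed.

Lemma fT m n : (n.+2%:R - m%:R) *: (P n.+2)^`(m) =
  (2 * n + 3)%:R *: ('X * (P n.+1)^`(m)) - (n.+1 + m)%:R *: (P n)^`(m).
Proof.
have H3 := congr1 (derivn m) (L3 n).
rewrite derivnB (derivnZ _ n.+2%:R) (derivnZ _ (2 * n + 3)%:R) (derivnZ _ n.+1%:R) LXg in H3.
case: m H3 => [|m] H3.
  apply: (comb _ H3); rewrite !derivn0 mulr0n -![_ *: _]mul_polyC; ring.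
have H4 := congr1 (derivn m) (L4 n).
rewrite derivnB (derivnZ _ (2 * n + 3)%:R) -!derivSn in H4.
apply: (comb2 (- m.+1%:R) _ H3 H4); rewrite /= -![_ *: _]mul_polyC; ring.
Qed.

Lemma fbot m : (P m.+1)^`(m) = (2 * m + 1)%:R *: ('X * (P m)^`(m)).
Proof.
case: m => [|m]; first by rewrite !derivn0 leg1 leg0 mulr1 scale1r.
have := fT m.+1 m; rewrite (PderivK _ _ (ltnSn m)) scaler0 subr0.
have -> : (m.+2%:R - m.+1%:R : R) = 1 by rewrite -natrB // subSnn.
by rewrite scale1r => ->; congr (_%:R *: _); lia.
Qed.

Lemma recW (t a0 a1 a2 b0 b1 b2 c0 c1 c2 x0 x1 x2 x3 x4 y0 y1 y2 y3 y4 : R) :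
 a0 != 0 -> a1 != 0 -> a2 != 0 -> b0 != 0 ->
 a0 * x2 = b0 * t * x1 - c0 * x0 ->
 a1 * x3 = b1 * t * x2 - c1 * x1 ->
 a2 * x4 = b2 * t * x3 - c2 * x2 ->
 a0 * y2 = b0 * (x1 + t * y1) - c0 * y0 ->
 a1 * y3 = b1 * (x2 + t * y2) - c1 * y1 ->
 a2 * y4 = b2 * (x3 + t * y3) - c2 * y2 ->
 b0 * a1 * a2 * (x4 * y2 - x2 * y4) =
   - 2 * b0 * b1 * b2 * t * x2 ^+ 2 + b2 * c1 * c0 * (x2 * y0 - x0 * y2).
Proof.
move=> na0 na1 na2 nb0 ex2 ex3 ex4 ey2 ey3 ey4.
have {}ex4 : x4 = (b2 * t * x3 - c2 * x2) / a2 by rewrite -ex4; field.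
have {}ey4 : y4 = (b2 * (x3 + t * y3) - c2 * y2) / a2 by rewrite -ey4; field.
have {}ex3 : x3 = (b1 * t * x2 - c1 * x1) / a1 by rewrite -ex3; field.
have {}ey3 : y3 = (b1 * (x2 + t * y2) - c1 * y1) / a1 by rewrite -ey3; field.
have {}ex2 : x2 = (b0 * t * x1 - c0 * x0) / a0 by rewrite -ex2; field.
have {}ey2 : y2 = (b0 * (x1 + t * y1) - c0 * y0) / a0 by rewrite -ey2; field.
rewrite ex4 ey4 ey3 ex3 ey2 ex2; field.
by rewrite na0 na1 na2.
Qed.

Lemma base0 (t k u b0 c0 x0 x1 y0 y1 x2 y2 : R) : t != 0 -> 0 < k -> 0 < u -> 0 < b0 ->
  x0 = k -> y0 = 0 -> x1 = u * t * k -> y1 = u * k ->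
  2 * y2 = b0 * (x1 + t * y1) - c0 * y0 -> t * (x2 * y0 - x0 * y2) < 0.
Proof.
move=> t0 k0 u0 b00 -> -> -> -> ey2.
have -> : y2 = b0 * (u * t * k + t * (u * k)) / 2 by rewrite -[y2](mulKf (_ : 2 != 0)) ?ey2 ?mulr0 ?subr0 ?pnatr_eq0 //; field.
have -> : t * (x2 * 0 - k * (b0 * (u * t * k + t * (u * k)) / 2)) = - (b0 * u * k ^+ 2 * t ^+ 2) by field.
have t2 : 0 < t ^+ 2 by rewrite exprn_even_gt0.
have k2 : 0 < k ^+ 2 by rewrite exprn_gt0.
by rewrite oppr_lt0; exact: mulr_gt0 (mulr_gt0 (mulr_gt0 b00 u0) k2) t2.
Qed.

Lemma base1 (t k u b0 c0 b1 c1 x0 x1 y0 y1 x2 y2 x3 y3 : R) : t != 0 -> 0 < k -> 0 < u -> 0 < b0 -> 0 < b1 ->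
  x0 = k -> y0 = 0 -> x1 = u * t * k -> y1 = u * k ->
  2 * y2 = b0 * (x1 + t * y1) - c0 * y0 ->
  3 * x3 = b1 * t * x2 - c1 * x1 ->
  3 * y3 = b1 * (x2 + t * y2) - c1 * y1 ->
  t * (x3 * y1 - x1 * y3) < 0.
Proof.
move=> t0 k0 u0 b00 b10 _ -> -> -> ey2 ex3 ey3.
have {}ey2 : y2 = b0 * u * k * t.
  apply: (mulfI (_ : 2 != 0)); first by rewrite pnatr_eq0.
  rewrite ey2; ring.
have {}ex3 : x3 = (b1 * t * x2 - c1 * (u * t * k)) / 3 by rewrite -ex3; field.
have {}ey3 : y3 = (b1 * (x2 + t * y2) - c1 * (u * k)) / 3 by rewrite -ey3; field.
rewrite ex3 ey3 ey2.
have -> : t * ((b1 * t * x2 - c1 * (u * t * k)) / 3 * (u * k) -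
   u * t * k * ((b1 * (x2 + t * (b0 * u * k * t)) - c1 * (u * k)) / 3))
   = - (b1 * b0 * u ^+ 2 * k ^+ 2 * (t ^+ 2) ^+ 2 / 3) by field.
have t2 : 0 < t ^+ 2 by rewrite exprn_even_gt0.
have k2 : 0 < k ^+ 2 by rewrite exprn_gt0.
have u2 : 0 < u ^+ 2 by rewrite exprn_gt0.
have t4 : 0 < (t ^+ 2) ^+ 2 by rewrite exprn_gt0.
have i3 : 0 < (3 : R)^-1 by rewrite invr_gt0 ltr0n.
rewrite oppr_lt0.
exact: mulr_gt0 (mulr_gt0 (mulr_gt0 (mulr_gt0 (mulr_gt0 b10 b00) u2) k2) t4) i3.
Qed.

Arguments recW {t a0 a1 a2 b0 b1 b2 c0 c1 c2 x0 x1 x2 x3 x4 y0 y1 y2 y3 y4}.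
Arguments base0 {t k u b0 c0 x0 x1 y0 y1 x2 y2}.
Arguments base1 {t k u b0 c0 b1 c1 x0 x1 y0 y1 x2 y2 x3 y3}.
Definition xv m (t : R) k := ((P k)^`(m)).[t].
Definition yv m (t : R) k := (((P k)^`(m))^`()).[t].
Definition Wt m (t : R) n := xv m t n.+2 * yv m t n - xv m t n * yv m t n.+2.

Lemma Tx m (t : R) n : (n.+2%:R - m%:R) * xv m t n.+2 =
  (2 * n + 3)%:R * t * xv m t n.+1 - (n.+1 + m)%:R * xv m t n.
Proof.
have := congr1 (fun p => p.[t]) (fT m n); rewrite /xv /= !hornerE => H.
exact: H.
Qed.

Lemma Ty m (t : R) n : (n.+2%:R - m%:R) * yv m t n.+2 =
  (2 * n + 3)%:R * (xv m t n.+1 + t * yv m t n.+1) - (n.+1 + m)%:R * yv m t n.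
Proof.
have := congr1 (fun p => p^`().[t]) (fT m n).
rewrite /= derivB !derivZ derivXp !hornerE => H.
by rewrite /xv /yv H; ring.
Qed.

Lemma Wneg m (t : R) : t != 0 -> forall j, t * Wt m t (m + j) < 0.
Proof.
move=> t0.
suff H : forall j, t * Wt m t (m + j) < 0 /\ t * Wt m t (m + j).+1 < 0.
  by move=> j; case: (H j).
have [k k0 Ek] := Pkk m.
have x0 : xv m t m = k by rewrite /xv Ek hornerC.
have y0 : yv m t m = 0 by rewrite /yv Ek derivC horner0.
have x1 : xv m t m.+1 = (2 * m + 1)%:R * t * k.
  by rewrite /xv fbot Ek !hornerE.
have y1 : yv m t m.+1 = (2 * m + 1)%:R * k.
  by rewrite /yv fbot Ek derivZ derivXp derivC mulr0 addr0 !hornerE.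
have am0 : (m.+2%:R - m%:R : R) = 2 by rewrite -natrB ?leqW // -addn2 addKn.
have am1 : (m.+3%:R - m%:R : R) = 3 by rewrite -natrB ?leqW // -addn3 addKn.
have apos : forall i, (m <= i)%N -> (0:R) < i.+2%:R - m%:R.
  by move=> i h; rewrite subr_gt0 ltr_nat; lia.
have bpos : forall i, (0 : R) < (2 * i + 3)%:R by move=> i; rewrite ltr0n; lia.
have cpos : forall i, (0 : R) < (i.+1 + m)%:R by move=> i; rewrite ltr0n; lia.
elim=> [|j [IH1 IH2]].
  rewrite addn0; split.
    have := Ty m t m; rewrite am0 => ey2.
    rewrite /Wt; apply: (base0 t0 k0 _ (bpos m) x0 y0 x1 y1 ey2).
    by rewrite ltr0n; lia.
  have := Ty m t m; rewrite am0 => ey2.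
  have := Tx m t m.+1; rewrite am1 => ex3.
  have := Ty m t m.+1; rewrite am1 => ey3.
  rewrite /Wt.
  apply: (base1 t0 k0 _ (bpos m) (bpos m.+1) x0 y0 x1 y1 ey2 ex3 ey3).
  by rewrite ltr0n; lia.
split; first by rewrite addnS.
rewrite !addnS.
set n := m + j.
have hn : (m <= n)%N by rewrite /n; lia.
have := recW (lt0r_neq0 (apos n hn)) (lt0r_neq0 (apos n.+1 (leqW hn)))
  (lt0r_neq0 (apos n.+2 (leqW (leqW hn)))) (lt0r_neq0 (bpos n))
  (Tx m t n) (Tx m t n.+1) (Tx m t n.+2) (Ty m t n) (Ty m t n.+1) (Ty m t n.+2).
set b0 := (2 * n + 3)%:R; set b1 := (2 * n.+1 + 3)%:R; set b2 := (2 * n.+2 + 3)%:R.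
set a1 := (n.+3%:R - m%:R); set a2 := (n.+4%:R - m%:R).
set c0 := (n.+1 + m)%:R; set c1 := (n.+2 + m)%:R.
move=> E.
have key : (b0 * a1 * a2) * (t * Wt m t n.+2) =
   - (2 * b0 * b1 * b2) * (t ^+ 2 * xv m t n.+2 ^+ 2) + (b2 * c1 * c0) * (t * Wt m t n).
  by rewrite /Wt mulrCA E; ring.
have p1 : 0 < b0 * a1 * a2 by rewrite !mulr_gt0 // ?apos // ?bpos //; lia.
rewrite -(pmulr_rlt0 _ p1) key.
have h1 : - (2 * b0 * b1 * b2) * (t ^+ 2 * xv m t n.+2 ^+ 2) <= 0.
  rewrite mulNr oppr_le0; apply: mulr_ge0; last by apply: mulr_ge0; exact: sqr_ge0.
  by apply/ltW; rewrite !mulr_gt0 // ?bpos.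
have h2 : (b2 * c1 * c0) * (t * Wt m t n) < 0.
  by rewrite pmulr_rlt0 // !mulr_gt0 // ?bpos ?cpos.
lra.
Qed.


Lemma noDouble m n (t : R) : (m <= n)%N -> t ^+ 2 - 1 != 0 ->
  ~ ((P n)^`(m).[t] = 0 /\ (P n)^`(m.+1).[t] = 0).
Proof.
move=> hmn ht [h0 h1].
have H : forall i, (P n)^`(m + i).[t] = 0 /\ (P n)^`((m + i).+1).[t] = 0.
  elim=> [|i [a b]]; first by rewrite addn0.
  split; first by rewrite addnS.
  have := congr1 (fun p => p.[t]) (ODE n (m + i)).
  rewrite !hornerD !hornerZ !hornerM hornerX a b !mulr0 !addr0 => /eqP.
  by rewrite addnS mulf_eq0 !hornerE (negPf ht) /= => /eqP.
have [c c0 Ec] := Pkk n.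
have := (H (n - m)%N).1; rewrite subnKC // Ec hornerC => c00.
by move: c0; rewrite c00 ltxx.
Qed.

Definition sq (x : R) := Num.sqrt (1 - x ^+ 2).

Lemma sq_der (t : R) : 0 < 1 - t ^+ 2 -> derivable sq t 1.
Proof.
move=> q0.
have -> : sq = Num.sqrt \o horner (1 - 'X ^+ 2).
  by apply/funext => x; rewrite /sq /= !hornerE.
apply/derivable1_diffP; apply: differentiable_comp.
  exact/derivable1_diffP/derivable_horner.
apply/derivable1_diffP.
have : 0 < (1 - 'X ^+ 2).[t] by rewrite !hornerE.
move=> /is_derive1_sqrt H; exact: ex_derive.
Qed.

Lemma dAL m (p : {poly R}) (t : R) : 0 < 1 - t ^+ 2 ->
  derive1 (fun x => sq x ^+ m * p.[x]) t =
  sq t ^+ m * p^`().[t] + p.[t] * derive1 (fun x => sq x ^+ m) t.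
Proof.
move=> q0.
have dS : derivable (fun x => sq x ^+ m) t 1.
  have := derivableX (n:=m) (sq_der t q0); rewrite exprfctE; exact.
have -> : (fun x => sq x ^+ m * p.[x]) = (fun x => sq x ^+ m) * horner p.
  by apply/funext.
rewrite derive1E deriveM //.
by rewrite -!derive1E -derivE.
Qed.
End Poly.
Arguments sq {R}.
Arguments xv {R}.
Arguments yv {R}.
Arguments Wt {R}.
Arguments Wneg {R m t}.
Arguments noDouble {R m n t}.

Theorem propositionA5 (R : realType) (m n : nat) (t : R) :
  -1 < t < 1 ->
  ((t != 0 -> (m + 2 <= n)%N ->
      assoc_legendre (R:=R) n m t * derive1 (assoc_legendre (R:=R) (n - 2) m) t
      - assoc_legendre (R:=R) (n - 2) m t * derive1 (assoc_legendre (R:=R) n m) t != 0)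
   /\
   ((m <= n)%N ->
      ~ (assoc_legendre (R:=R) n m t = 0 /\ derive1 (assoc_legendre (R:=R) n m) t = 0))).
Proof.
move=> /andP[tl tr].
have q0 : 0 < 1 - t ^+ 2 by nra.
set S := sq t ^+ m.
have S0 : 0 < S by rewrite exprn_gt0 // sqrtr_gt0.
set d := derive1 (fun x => sq x ^+ m) t.
have dA : forall k, derive1 (assoc_legendre (R:=R) k m) t = S * yv m t k + xv m t k * d.
  by move=> k; rewrite /assoc_legendre; exact: dAL.
have aA : forall k, assoc_legendre (R:=R) k m t = S * xv m t k by [].
split.
  move=> t0 hmn; rewrite !dA !aA.
  have [k ->] : exists k, n = (m + k).+2 by exists (n - m - 2)%N; lia.
  have -> : ((m + k).+2 - 2)%N = (m + k)%N by lia.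
  have -> : S * xv m t (m + k).+2 * (S * yv m t (m + k) + xv m t (m + k) * d) -
    S * xv m t (m + k) * (S * yv m t (m + k).+2 + xv m t (m + k).+2 * d) =
    S ^+ 2 * Wt m t (m + k) by rewrite /Wt; ring.
  apply: mulf_neq0; first by rewrite expf_neq0 // gt_eqF.
  apply/negP => /eqP W0; have := Wneg (m:=m) t0 k; by rewrite W0 mulr0 ltxx.
move=> hmn []; rewrite aA dA => u0 du0.
have x0 : xv m t n = 0 by move/eqP: u0; rewrite mulf_eq0 (gt_eqF S0) /= => /eqP.
rewrite x0 mul0r addr0 in du0.
have y0 : yv m t n = 0 by move/eqP: du0; rewrite mulf_eq0 (gt_eqF S0) /= => /eqP.
have ht : t ^+ 2 - 1 != 0 by apply: ltr0_neq0; lra.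
apply: (noDouble hmn ht); split; first exact: x0.
by move: y0; rewrite /yv derivnS.
Qed.
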